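(* Let $J^*_T=\inf_{\pi\in\Pi}J_T(\pi)$ and let $\Pi^*_T=\{\pi\in\Pi: J_T(\pi)=J^*_T\}$ for $T\in[0,\infty]$. Then: (1) $J^*_T$ does not depend on $T$, i.e. $J^*_T=J^*_0=:J^*$ for all $T\in[0,\infty]$; (2) for all $T_1<T_2$ in $[0,\infty]$, $\Pi^*_{T_1}\subseteq\Pi^*_{T_2}$; (3) for every $p_0\in|G|^k$ and every $T>D_G+J^*/\phi_{\min}$ (with $T$ finite), $\Pi^*_T\cap\Pi_{p_0}\neq\emptyset$, where $\Pi_{p_0}=\{\pi\in\Pi:\pi(0)=p_0\}$.
   Context: Let $G=(V,E,A,\phi)$ be a finite connected undirected graph with node set $V$, edge set $E$, edge lengths $A:E\to\mathbb{R}_{>0}$ and node weights $\phi:V\to\mathbb{R}_{>0}$; $\phi_{\min}=\min_v\phi(v)$. Let $|G|$ be its metric graph (each edge $e$ realized as a closed interval of length $A(e)$ glued at its endpoints) with shortest-path metric $d$, and let $D_G$ be the diameter of $(|G|,d)$. Fix $k\ge1$ robots $r_1,\dots,r_k$, and equip $|G|^k$ with $d_k(p,p')=\max_i d(p_i,p'_i)$. Feasible joint strategies: $\Pi=\{\pi\in C([0,\infty),|G|^k):\ d_k(\pi(t),\pi(t'))\le|t-t'|\ \forall t,t'\ge0\}$, $\pi=(\pi_{r_1},\dots,\pi_{r_k})$. For $v\in V$, $t\ge0$: $\tau^\pi(v,t)=\sup\{t'\le t:\pi_r(t')=v\text{ for some }r\}$ if nonempty, else $0$; $L^\pi_v(t)=t-\tau^\pi(v,t)$;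 $M^\pi(t)=\max_{v}\phi(v)L^\pi_v(t)$. For finite $T\ge 0$, $J_T(\pi)=\sup_{t\ge T}M^\pi(t)\in[0,\infty]$; $J_\infty(\pi)=\limsup_{t\to\infty}M^\pi(t)$. *)

(* Defs.v *)
From mathcomp Require Import all_boot.
From Stdlib Require Import Reals.
From Coquelicot Require Import Coquelicot.

Set Implicit Arguments.
Unset Strict Implicit.
Unset Printing Implicit Defensive.

Local Open Scope R_scope.

Section MetricGraph.

(* An undirected graph: node set V, edge set E (finite types), each edge e has
   two endpoints src e, tgt e (the orientation is only a naming convention),
   lengths A e > 0 and node weights phi v > 0. *)
Variables (V E : finType) (src tgt : E -> V) (A : E -> R) (phi : V -> R).

Definition simple_graph : Prop :=
  (forall e, src e <> tgt e) /\
  (forall e e', (src e = src e' /\ tgt e = tgt e') \/ (src e = tgt e' /\ tgt e = src e') -> e = e').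

(* Walks in the combinatorial graph: lists of edges with a traversal direction
   (true = from src to tgt). *)
Fixpoint is_walk (u : V) (w : list (E * bool)) (v : V) : Prop :=
  match w with
  | nil => u = v
  | (e, b) :: w' =>
      (if b then src e else tgt e) = u /\ is_walk (if b then tgt e else src e) w' v
  end.

Fixpoint walk_len (w : list (E * bool)) : R :=
  match w with
  | nil => 0
  | (e, _) :: w' => A e + walk_len w'
  end.

Definition connected : Prop := forall u v : V, exists w, is_walk u w v.

(* Points of the metric graph |G|: either a node, or an interior point of an
   edge e at distance s from src e (0 < s < A e).  Each point of |G| has
   exactly one valid representation. *)
Inductive Point : Type :=
  | PV : V -> Point
  | PE : E -> R -> Point.

Definition valid_point (x : Point) : Prop :=
  match x with
  | PV _ => True
  | PE e s => 0 < s < A e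
  end.

Definition anchor (x : Point) (a : V) (o : R) : Prop :=
  match x with
  | PV v => a = v /\ o = 0
  | PE e s => (a = src e /\ o = s) \/ (a = tgt e /\ o = A e - s)
  end.

(* Lengths of the (combinatorial descriptions of) paths in |G| from x to y:
   either straight along a common edge, or leave x's cell through an endpoint,
   follow a walk of the graph, and enter y's cell through an endpoint. *)
Definition path_length (x y : Point) (r : R) : Prop :=
  (exists e s s', x = PE e s /\ y = PE e s' /\ r = Rabs (s - s')) \/
  (exists a oa b ob w, anchor x a oa /\ anchor y b ob /\ is_walk a w b /\
                       r = oa + walk_len w + ob).

Definition dist (x y : Point) : R := real (Glb_Rbar (path_length x y)).

Definition diameter : Rbar :=
  Lub_Rbar (fun r => exists x y, valid_point x /\ valid_point y /\ r = dist x y).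

Definition phi_min : R := real (Glb_Rbar (fun r => exists v, r = phi v)).

Variable k : nat.

Definition Config := 'I_k -> Point.

Definition valid_config (p : Config) : Prop := forall i, valid_point (p i).

Definition dist_k (p p' : Config) : R := \big[Rmax/0]_(i < k) dist (p i) (p' i).

(* Joint strategies: maps [0,oo) -> |G|^k (values on t < 0 are irrelevant).
   1-Lipschitz for d_k (which implies continuity). *)
Definition Strategy := R -> Config.

Definition feasible (pi : Strategy) : Prop :=
  (forall t, 0 <= t -> valid_config (pi t)) /\
  (forall t t', 0 <= t -> 0 <= t' -> dist_k (pi t) (pi t') <= Rabs (t - t')).

(* tau^pi(v,t): last visit time of node v up to time t (0 if never visited). *)
Definition visit_times (pi : Strategy) (v : V) (t : R) (t' : R) : Prop :=
  0 <= t' <= t /\ exists r : 'I_k, pi t' r = PV v.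

Definition last_visit (pi : Strategy) (v : V) (t : R) : R :=
  match Lub_Rbar (visit_times pi v t) with
  | Finite s => s
  | _ => 0
  end.

Definition latency (pi : Strategy) (v : V) (t : R) : R := t - last_visit pi v t.

Definition weighted_max_latency (pi : Strategy) (t : R) : R :=
  \big[Rmax/0]_(v : V) (phi v * latency pi v t).

(* Infimum of a set of extended reals not containing -oo. *)
Definition Rbar_inf (P : Rbar -> Prop) : Rbar := Glb_Rbar (fun r => P (Finite r)).

(* J_T(pi) for T in [0,oo]: sup_{t >= T} M(t) for finite T, and
   limsup_{t -> oo} M(t) = inf_{T >= 0} sup_{t >= T} M(t) for T = +oo. *)
Definition J_fin (pi : Strategy) (T : R) : Rbar :=
  Lub_Rbar (fun m => exists t, T <= t /\ m = weighted_max_latency pi t).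

Definition J (T : Rbar) (pi : Strategy) : Rbar :=
  match T with
  | Finite T0 => J_fin pi T0
  | _ => Rbar_inf (fun j => exists T0, 0 <= T0 /\ j = J_fin pi T0)
  end.

Definition Jstar (T : Rbar) : Rbar := Rbar_inf (fun j => exists pi, feasible pi /\ j = J T pi).

Definition optimal (T : Rbar) (pi : Strategy) : Prop := feasible pi /\ J T pi = Jstar T.

End MetricGraph.

(* Main.v *)
Require Import Defs.
From mathcomp Require Import all_boot.
From Stdlib Require Import Reals.
From Coquelicot Require Import Coquelicot.
From Stdlib Require Import Lra Lia Classical ClassicalEpsilon ZArith.
Local Open Scope R_scope.
Set Implicit Arguments.
Unset Strict Implicit.

Lemma fchoice (X Y : Type) (P : X -> Y -> Prop) :
  (forall a, exists b, P a b) -> exists f, forall a, P a (f a).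
Proof.
move=> H; exists (fun a => proj1_sig (constructive_indefinite_description _ (H a))).
move=> a; exact: (proj2_sig (constructive_indefinite_description _ (H a))).
Qed.

Lemma glb_fin (E0 : R -> Prop) (m r0 : R) : E0 r0 -> (forall r, E0 r -> m <= r) ->
  exists g, Glb_Rbar E0 = Finite g /\ m <= g /\ (forall r, E0 r -> g <= r) /\
   (forall eps, 0 < eps -> exists r, E0 r /\ r < g + eps) /\
   (forall m', (forall r, E0 r -> m' <= r) -> m' <= g).
Proof.
move=> H0 Hm; case: (Glb_Rbar_correct E0) => lb glb.
case E: (Glb_Rbar E0) => [g| |].
- rewrite E in lb glb.
  have Hg : forall m', (forall r, E0 r -> m' <= r) -> m' <= g.
    by move=> m' Hm'; apply: (glb (Finite m')) => x Hx; apply: Hm'.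
  exists g; split => //; split; first exact: Hg.
  split; first by move=> r Hr; exact: (lb r Hr).
  split => // eps Heps; apply: NNPP => Hn.
  have : g + eps <= g; last lra.
  apply: Hg => r Hr; apply: Rnot_lt_le => Hlt; apply: Hn; by exists r.
- rewrite E in lb; by have := lb r0 H0.
- rewrite E in glb; by have := glb (Finite m) (fun x Hx => Hm x Hx).
Qed.

Lemma lub_le (E0 : R -> Prop) (c : R) : (forall x, E0 x -> x <= c) -> Rbar_le (Lub_Rbar E0) c.
Proof.
move=> H; case: (Lub_Rbar_correct E0) => ub lub; apply: lub => x Hx; exact: H.
Qed.

Lemma lub_ge (E0 : R -> Prop) (x : R) : E0 x -> Rbar_le x (Lub_Rbar E0).
Proof. move=> H; case: (Lub_Rbar_correct E0) => ub _; exact: ub. Qed.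

Lemma list_min (I : eqType) (s : seq I) (f : I -> R) : (forall i, 0 < f i) ->
  exists d, 0 < d /\ forall i, i \in s -> d <= f i.
Proof.
move=> Hf; elim: s => [|a s [d [Hd IH]]]; first by exists 1; split => //; lra.
exists (Rmin d (f a)); split; first by apply: Rmin_pos.
move=> i; rewrite in_cons => /orP [/eqP ->|Hi]; first exact: Rmin_r.
apply: Rle_trans (Rmin_l _ _) (IH _ Hi).
Qed.

Lemma fin_min (I : finType) (f : I -> R) : (forall i, 0 < f i) ->
  exists d, 0 < d /\ forall i, d <= f i.
Proof.
move=> Hf; case: (list_min (enum I) Hf) => d [Hd H]; exists d; split => // i.
by apply: H; rewrite mem_enum.
Qed.

Lemma bigmax_ge (I : eqType) (s : seq I) (P : pred I) (f : I -> R) j :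
  j \in s -> P j -> f j <= \big[Rmax/0]_(i <- s | P i) f i.
Proof.
elim: s => [|a s IH] //; rewrite in_cons big_cons => /orP [/eqP ->|Hj] Pj.
- by rewrite Pj; apply: Rmax_l.
- case: (P a); last exact: IH.
  apply: Rle_trans (IH Hj Pj) (Rmax_r _ _).
Qed.

Lemma bigmax_le (I : Type) (s : seq I) (P : pred I) (f : I -> R) c :
  0 <= c -> (forall i, P i -> f i <= c) -> \big[Rmax/0]_(i <- s | P i) f i <= c.
Proof.
move=> Hc H; apply: (big_ind (fun x => x <= c)) => //.
by move=> x y Hx Hy; apply: Rmax_lub.
Qed.

Lemma small_inv (eps : R) : 0 < eps -> exists N, forall n, (N <= n)%coq_nat -> / (INR n + 1) < eps.
Proof.
move=> He; case: (archimed (/ eps)) => H1 _.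
have Hup : (0 <= up (/eps))%Z.
  apply: le_IZR; have := Rinv_0_lt_compat _ He; lra.
exists (Z.to_nat (up (/ eps))) => n Hn.
have HN : / eps < INR n + 1.
  apply: Rlt_le_trans H1 _; rewrite -(Z2Nat.id _ Hup) -INR_IZR_INZ.
  have := le_INR _ _ Hn; lra.
have Hpos : 0 < INR n + 1 by have := pos_INR n; lra.
rewrite -(Rinv_inv eps); apply: Rinv_lt_contravar => //.
by apply: Rmult_lt_0_compat => //; apply: Rinv_0_lt_compat.
Qed.

Lemma pigeon (F : finType) (f : nat -> F) : exists c, forall M, exists n, (M <= n)%coq_nat /\ f n = c.
Proof.
apply: NNPP => Hn.
have H : forall c, exists M, forall n, (M <= n)%coq_nat -> f n <> c.
  move=> c; apply: NNPP => H1; apply: Hn; exists c => M; apply: NNPP => H2; apply: H1.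
  exists M => n Hn' Hfn; apply: H2; by exists n.
case: (fchoice H) => Mf HM.
set N := (\max_(c : F) Mf c)%N.
apply: (HM (f N) N) => //; apply/leP; exact: (leq_bigmax_cond (f N) (erefl true)).
Qed.

Lemma inf_sub (P : nat -> Prop) : (forall M, exists n, (M <= n)%coq_nat /\ P n) ->
  exists chi, forall m, (m <= chi m)%coq_nat /\ P (chi m).
Proof. exact: fchoice. Qed.

Lemma BW (u : nat -> R) lo hi : (forall n, lo <= u n <= hi) ->
  exists chi l, (forall m, (m <= chi m)%coq_nat) /\ lo <= l <= hi /\
   forall eps, 0 < eps -> exists N, forall n, (N <= n)%coq_nat -> Rabs (u (chi n) - l) < eps.
Proof.
move=> Hb; case: (ex_LimSup_seq u) => [[l| |] Hl] /=.
- have H : forall m, exists n, (m <= n)%coq_nat /\ Rabs (u n - l) < / (INR m + 1).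
    move=> m; have Hp : 0 < / (INR m + 1) by apply: Rinv_0_lt_compat; have := pos_INR m; lra.
    case: (Hl (mkposreal _ Hp)) => /= Hinf [N HN].
    case: (Hinf (Nat.max m N)) => n [Hn1 Hn2]; exists n; split; first lia.
    have := HN n ltac:(lia); move=> Hn3; apply: Rabs_def1; lra.
  case: (fchoice H) => chi Hchi; exists chi, l; split; first by move=> m; case: (Hchi m).
  split; last first.
    move=> eps He; case: (small_inv He) => N HN; exists N => n Hn.
    case: (Hchi n) => _ H2; apply: Rlt_trans H2 (HN n Hn).
  split; apply: Rnot_lt_le => Hlt.
  + have Hp : 0 < lo - l by lra.
    case: (Hl (mkposreal _ Hp)) => _ [N HN]; have := HN N (le_n N); have := Hb N; simpl; lra.
  + have Hp : 0 < l - hi by lra.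
    case: (Hl (mkposreal _ Hp)) => Hinf _; case: (Hinf 0%nat) => n [_ Hn]; have := Hb n; simpl in Hn; lra.
- case: (Hl hi 0%nat) => n [_ Hn]; have := Hb n; lra.
- case: (Hl lo) => N HN; have := HN N (le_n N); have := Hb N; lra.
Qed.

Section Graph.
Variables (V E : finType) (src tgt : E -> V) (A : E -> R).
Hypothesis HA : forall e, 0 < A e.
Hypothesis Hconn : connected src tgt.

Local Notation d := (Defs.dist src tgt A).
Local Notation PL := (path_length src tgt A).
Local Notation valid := (valid_point A).

Lemma walk_len_ge0 w : 0 <= walk_len A w.
Proof. elim: w => [|[e b] w IH] /=; [lra | have := HA e; lra]. Qed.

Lemma walk_app u w1 v w2 z : is_walk src tgt u w1 v -> is_walk src tgt v w2 z ->
  is_walk src tgt u (w1 ++ w2) z /\ walk_len A (w1 ++ w2) = walk_len A w1 + walk_len A w2.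
Proof.
elim: w1 u => [|[e b] w1 IH] u /=; first by move=> -> H; split => //; lra.
move=> [H1 H2] H3; case: (IH _ H2 H3) => H4 H5; split => //; lra.
Qed.

Lemma anchor_ge0 x a o : valid x -> anchor src tgt A x a o -> 0 <= o.
Proof. case: x => [v|e s] /=; [move=> _ [_ ->]; lra | move=> Hs [[_ ->]|[_ ->]]; lra]. Qed.

Lemma PL_ge0 x y r : valid x -> valid y -> PL x y r -> 0 <= r.
Proof.
move=> Hx Hy [[e [s [s' [_ [_ ->]]]]]|[a [oa [b [ob [w [H1 [H2 [_ ->]]]]]]]]].
- exact: Rabs_pos.
- have := anchor_ge0 Hx H1; have := anchor_ge0 Hy H2; have := walk_len_ge0 w; lra.
Qed.

Lemma anchor_ex x : exists a o, anchor src tgt A x a o.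
Proof. case: x => [v|e s] /=; [by exists v, 0 | exists (src e), s; by left]. Qed.

Lemma PL_ex x y : exists r, PL x y r.
Proof.
case: (anchor_ex x) => a [oa Ha]; case: (anchor_ex y) => b [ob Hb].
case: (Hconn a b) => w Hw; exists (oa + walk_len A w + ob); right.
by exists a, oa, b, ob, w.
Qed.

Lemma gd_spec x y : valid x -> valid y ->
  0 <= d x y /\ (forall r, PL x y r -> d x y <= r) /\
  (forall eps, 0 < eps -> exists r, PL x y r /\ r < d x y + eps) /\
  (forall m, (forall r, PL x y r -> m <= r) -> m <= d x y).
Proof.
move=> Hx Hy; case: (PL_ex x y) => r0 H0.
case: (glb_fin H0 (fun r Hr => PL_ge0 Hx Hy Hr)) => g [Hg [H1 [H2 [H3 H4]]]].
rewrite /Defs.dist Hg /=; by repeat split.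
Qed.

Lemma gd_ge0 x y : valid x -> valid y -> 0 <= d x y.
Proof. by move=> Hx Hy; case: (gd_spec Hx Hy). Qed.

Lemma gd_le x y r : valid x -> valid y -> PL x y r -> d x y <= r.
Proof. by move=> Hx Hy; case: (gd_spec Hx Hy) => _ [H _]; apply: H. Qed.

Lemma PL_concat x y z r1 r2 : valid y -> PL x y r1 -> PL y z r2 ->
  exists r, PL x z r /\ r <= r1 + r2.
Proof.
move=> Hy [[e [s [s' [-> [-> ->]]]]]|[a [oa [b [ob [w [Ha [Hb [Hw ->]]]]]]]]].
- move=> [[e' [t [t' [[<- <-] [-> ->]]]]]|[a [oa [b [ob [w [Ha [Hb [Hw ->]]]]]]]]].
  + exists (Rabs (s - t')); split; first by left; exists e, s, t'.
    have := Rabs_triang (s - s') (s' - t'); replace (s - s' + (s' - t')) with (s - t') by ring; lra.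
  + case: Ha => [[Ea ->]|[Ea ->]]; subst a.
    * exists (s + walk_len A w + ob); split; first by right; exists (src e), s, b, ob, w; repeat split => //; left.
      have := Rle_abs (s - s'); lra.
    * exists ((A e - s) + walk_len A w + ob); split; first by right; exists (tgt e), (A e - s), b, ob, w; repeat split => //; right.
      have := Rle_abs (s' - s); rewrite Rabs_minus_sym; lra.
- move=> [[e' [t [t' [Hye [-> ->]]]]]|[c [oc [f [of_ [w' [Hc [Hf [Hw' ->]]]]]]]]].
  + subst y; case: Hb => [[Eb ->]|[Eb ->]]; subst b.
    * exists (oa + walk_len A w + t'); split; first by right; exists a, oa, (src e'), t', w; repeat split => //; left.
      have := Rle_abs (t - t'); rewrite Rabs_minus_sym; have := Rle_abs (t' - t); lra.
    * exists (oa + walk_len A w + (A e' - t')); split; first by right; exists a, oa, (tgt e'), (A e' - t'), w; repeat split => //; right.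
      have := Rle_abs (t - t'); lra.
  + have Hob := anchor_ge0 Hy Hb; have Hoc := anchor_ge0 Hy Hc.
    have Hcase : exists w0, is_walk src tgt b w0 c /\ walk_len A w0 <= ob + oc.
      case: y Hy Hb Hc {Hob Hoc} => [v|e s] /=.
      * move=> _ [-> ->] [-> ->]; exists nil; split => //=; lra.
      * move=> Hs [[-> ->]|[-> ->]] [[-> ->]|[-> ->]].
        -- exists nil; split => //=; lra.
        -- exists [:: (e, true)]; split => //=; lra.
        -- exists [:: (e, false)]; split => //=; lra.
        -- exists nil; split => //=; lra.
    case: Hcase => w0 [Hw0 Hl0].
    case: (walk_app Hw Hw0) => Hw1 Hl1; case: (walk_app Hw1 Hw') => Hw2 Hl2.
    exists (oa + walk_len A ((w ++ w0) ++ w') + of_); split.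
    * by right; exists a, oa, f, of_, ((w ++ w0) ++ w').
    * rewrite Hl2 Hl1; lra.
Qed.

Lemma gd_tri x y z : valid x -> valid y -> valid z -> d x z <= d x y + d y z.
Proof.
move=> Hx Hy Hz; apply: Rnot_lt_le => Hlt.
set eps := (d x z - (d x y + d y z)) / 2.
have He : 0 < eps by rewrite /eps; lra.
case: (gd_spec Hx Hy) => _ [_ [H1 _]]; case: (H1 _ He) => r1 [P1 L1].
case: (gd_spec Hy Hz) => _ [_ [H2 _]]; case: (H2 _ He) => r2 [P2 L2].
case: (PL_concat Hy P1 P2) => r [P L].
have := gd_le Hx Hz P; rewrite /eps in L1 L2; lra.
Qed.

Lemma gd_refl x : valid x -> d x x <= 0.
Proof.
move=> Hx; case: x Hx => [v|e s] Hx.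
- apply: gd_le => //; right; exists v, 0, v, 0, nil; repeat split => //=; lra.
- apply: gd_le => //; left; exists e, s, s; repeat split; rewrite Rminus_diag Rabs_R0 //.
Qed.

Lemma gd_node x v : valid x -> (forall eps, 0 < eps -> d x (PV E v) < eps) -> x = PV E v.
Proof.
move=> Hx H; case: (fin_min HA) => dA [HdA HdAle].
have Hvv : valid (PV E v) by [].
case: x Hx H => [w|e s] Hx H.
- case: (eqVneq w v) => [-> //|Hne]; exfalso.
  have : dA <= d (PV E w) (PV E v); last by move=> Hle; have := H _ HdA; lra.
  case: (gd_spec Hx Hvv) => _ [_ [_ H4]]; apply: H4.
  move=> r [[e [s [s' [// _]]]]|[a [oa [b [ob [wk [[-> ->] [[-> ->] [Hw ->]]]]]]]]].
  case: wk Hw => [|[e0 b0] wk] /= Hw; first by move: Hne; rewrite Hw eqxx.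
  have := walk_len_ge0 wk; have := HdAle e0; lra.
- exfalso; simpl in Hx.
  have Hm : 0 < Rmin s (A e - s) by apply: Rmin_pos; lra.
  have : Rmin s (A e - s) <= d (PE V e s) (PV E v); last by move=> Hle; have := H _ Hm; lra.
  case: (gd_spec (x := PE V e s) Hx Hvv) => _ [_ [_ H4]]; apply: H4.
  move=> r [[e' [t [t' [_ [// _]]]]]|[a [oa [b [ob [wk [Ha [[-> ->] [Hw ->]]]]]]]]].
  have := walk_len_ge0 wk; have := Rmin_l s (A e - s); have := Rmin_r s (A e - s).
  case: Ha => [[_ ->]|[_ ->]]; lra.
Qed.

Definition pt (e : E) (u : R) : Point V E :=
  if Rle_dec u 0 then PV E (src e) else if Rle_dec (A e) u then PV E (tgt e) else PE V e u.

Lemma pt_valid e u : valid (pt e u).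
Proof. rewrite /pt; case: Rle_dec => // H1; case: Rle_dec => // H2 /=; lra. Qed.

Lemma pt_cases e u : (u <= 0 /\ pt e u = PV E (src e)) \/
  (0 < u /\ A e <= u /\ pt e u = PV E (tgt e)) \/ (0 < u < A e /\ pt e u = PE V e u).
Proof.
rewrite /pt; case: Rle_dec => H1; first by left.
case: Rle_dec => H2; [right; left | right; right]; repeat split => //; lra.
Qed.

Lemma pt_dist e u u' : 0 <= u <= A e -> 0 <= u' <= A e -> d (pt e u) (pt e u') <= Rabs (u - u').
Proof.
move=> Hu Hu'; have He := HA e.
suff [r [Hr Hle]] : exists r, PL (pt e u) (pt e u') r /\ r <= Rabs (u - u').
  apply: Rle_trans (gd_le _ _ Hr) Hle; exact: pt_valid.
have Ha := Rabs_pos (u - u'); have Hb := Rle_abs (u - u'); have Hc := Rle_abs (u' - u).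
rewrite Rabs_minus_sym in Hc.
case: (pt_cases e u) => [[H1 ->]|[[H1 [H2 ->]]|[H1 ->]]];
  case: (pt_cases e u') => [[H3 ->]|[[H3 [H4 ->]]|[H3 ->]]].
- exists 0; split; last lra; right; exists (src e), 0, (src e), 0, nil; repeat split => //=; lra.
- exists (A e); split; last lra; right; exists (src e), 0, (tgt e), 0, [:: (e, true)]; repeat split => //=; lra.
- exists u'; split; last lra; right; exists (src e), 0, (src e), u', nil; repeat split => //=; [by left | lra].
- exists (A e); split; last lra; right; exists (tgt e), 0, (src e), 0, [:: (e, false)]; repeat split => //=; lra.
- exists 0; split; last lra; right; exists (tgt e), 0, (tgt e), 0, nil; repeat split => //=; lra.
- exists (A e - u'); split; last lra; right; exists (tgt e), 0, (tgt e), (A e - u'), nil; repeat split => //=; [by right | lra].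
- exists u; split; last lra; right; exists (src e), u, (src e), 0, nil; repeat split => //=; [by left | lra].
- exists (A e - u); split; last lra; right; exists (tgt e), (A e - u), (tgt e), 0, nil; repeat split => //=; [by right | lra].
- exists (Rabs (u - u')); split; last lra; left; exists e, u, u'; repeat split.
Qed.

Definition conv (x : nat -> Point V E) (l : Point V E) :=
  forall eps, 0 < eps -> exists N, forall n, (N <= n)%coq_nat -> d (x n) l < eps /\ d l (x n) < eps.

Lemma conv_sub x l chi : (forall m, (m <= chi m)%coq_nat) -> conv x l -> conv (fun m => x (chi m)) l.
Proof. move=> Hc H eps He; case: (H _ He) => N HN; exists N => n Hn; apply: HN; have := Hc n; lia. Qed.

Definition key (x : Point V E) : (V + E)%type :=
  match x with PV v => inl v | PE e _ => inr e end.

Lemma seq_compact (x : nat -> Point V E) : (forall n, valid (x n)) ->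
  exists chi l, (forall m, (m <= chi m)%coq_nat) /\ valid l /\ conv (fun m => x (chi m)) l.
Proof.
move=> Hx; case: (pigeon (fun n => key (x n))) => c Hc.
case: (inf_sub Hc) => chi1 Hchi1.
case: c Hc Hchi1 => [v|e] _ Hchi1.
- exists chi1, (PV E v); split; first by move=> m; case: (Hchi1 m).
  split => // eps He; exists 0%nat => n _.
  case: (Hchi1 n) => _; case E1: (x (chi1 n)) => [w|f s] //= [Hw]; subst w.
  have := gd_refl (Hx (chi1 n)); rewrite E1 => Hd; split; lra.
- pose s n := match x (chi1 n) with PE _ s => s | _ => 0 end.
  have Hs : forall n, x (chi1 n) = PE V e (s n) /\ 0 < s n < A e.
    move=> n; case: (Hchi1 n) => _; have := Hx (chi1 n); rewrite /s.
    case: (x (chi1 n)) => [w|f t] //= Ht [Hf]; subst f; by split.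
  case: (BW (u := s) (lo := 0) (hi := A e)) => [n|chi2 [l [Hc2 [Hl Hconv]]]].
    case: (Hs n) => _; lra.
  exists (fun m => chi1 (chi2 m)), (pt e l); split.
    move=> m; case: (Hchi1 (chi2 m)) => H1 _; have := Hc2 m; lia.
  split; first exact: pt_valid.
  move=> eps He; case: (Hconv _ He) => N HN; exists N => n Hn.
  case: (Hs (chi2 n)) => -> Hsn.
  have Hp : PE V e (s (chi2 n)) = pt e (s (chi2 n)).
    rewrite /pt; case: Rle_dec => H1; first lra; case: Rle_dec => H2 //; lra.
  rewrite Hp; have := HN n Hn; move=> Hlt; split.
  + apply: Rle_lt_trans (pt_dist _ _) Hlt; lra.
  + apply: Rle_lt_trans (pt_dist _ _) _; try lra; by rewrite Rabs_minus_sym.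
Qed.

End Graph.

Lemma lub_fin (E0 : R -> Prop) r0 M : E0 r0 -> (forall r, E0 r -> r <= M) ->
  exists g, Lub_Rbar E0 = Finite g /\ (forall r, E0 r -> r <= g) /\ g <= M /\
    (forall eps, 0 < eps -> exists r, E0 r /\ g - eps < r).
Proof.
move=> H0 HM; case: (Lub_Rbar_correct E0) => ub lub.
case E: (Lub_Rbar E0) => [g| |]; rewrite E in ub lub.
- exists g; split => //; split; first by move=> r Hr; exact: (ub r Hr).
  split; first by apply: (lub (Finite M)) => x Hx; apply: HM.
  move=> eps He; apply: NNPP => Hn.
  have : g <= g - eps; last lra.
  apply: (lub (Finite (g - eps))) => x Hx /=; apply: Rnot_lt_le => Hlt; apply: Hn; by exists x.
- by have := lub (Finite M) (fun x Hx => HM x Hx).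
- by have := ub r0 H0.
Qed.

Lemma lub_empty (E0 : R -> Prop) : (forall r, ~ E0 r) -> Lub_Rbar E0 = m_infty.
Proof.
move=> H; case: (Lub_Rbar_correct E0) => ub lub.
have := lub m_infty (fun x Hx => False_ind _ (H x Hx)).
by case: (Lub_Rbar E0).
Qed.

Lemma dense_time t eps : 0 <= t -> 0 < eps -> exists m l : nat, Rabs (t - INR m / (INR l + 1)) < eps.
Proof.
move=> Ht He; case: (small_inv He) => l Hl; have Hl' := Hl l (le_n l).
have Hp : 0 < INR l + 1 by have := pos_INR l; lra.
set z := Int_part (t * (INR l + 1)).
have [Hz1 Hz2] : IZR z <= t * (INR l + 1) /\ IZR z - t * (INR l + 1) > -1 by exact: base_Int_part.
have Hz0 : (0 <= z)%Z.
  suff : (-1 < z)%Z by lia.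
  apply: lt_IZR; have : 0 <= t * (INR l + 1) by apply: Rmult_le_pos; lra.
  lra.
exists (Z.to_nat z), l.
rewrite INR_IZR_INZ Z2Nat.id //.
have H1 : IZR z / (INR l + 1) <= t.
  apply: (Rmult_le_reg_r (INR l + 1)) => //; field_simplify; lra.
have H2 : t - / (INR l + 1) < IZR z / (INR l + 1).
  apply: (Rmult_lt_reg_r (INR l + 1)) => //; field_simplify; lra.
rewrite Rabs_right; lra.
Qed.

Lemma lim_le_inf t L c : 0 < c -> (forall N, exists n, (N <= n)%coq_nat /\ t <= L + c * / (INR n + 1)) -> t <= L.
Proof.
move=> Hc H; apply: Rnot_lt_le => Hlt.
have He : 0 < (t - L) / c by apply: Rdiv_lt_0_compat; lra.
case: (small_inv He) => N HN; case: (H N) => n [Hn Ht].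
have := HN n Hn; move=> Hi.
have : c * / (INR n + 1) < t - L.
  have := Rmult_lt_compat_l c _ _ Hc Hi; rewrite /Rdiv; move=> Hh.
  replace (c * ((t - L) * / c)) with (t - L) in Hh by (field; lra); exact Hh.
lra.
Qed.

Section Strat.
Variables (V E : finType) (src tgt : E -> V) (A : E -> R) (phi : V -> R) (k : nat).
Hypothesis HA : forall e, 0 < A e.
Hypothesis Hconn : connected src tgt.
Hypothesis Hphi : forall v, 0 < phi v.

Local Notation d := (Defs.dist src tgt A).
Local Notation valid := (valid_point A).
Local Notation Mw := (weighted_max_latency phi (k:=k)).

Lemma lv_spec (pi : Strategy V E k) v t : 0 <= t ->
  0 <= last_visit pi v t <= t /\
  (forall t', visit_times pi v t t' -> t' <= last_visit pi v t) /\
  (forall eps, 0 < eps -> (exists t', visit_times pi v t t' /\ last_visit pi v t - eps < t') \/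
                          (last_visit pi v t = 0 /\ forall t', ~ visit_times pi v t t')).
Proof.
move=> Ht; case: (classic (exists t', visit_times pi v t t')) => [[t0 H0]|Hn].
- have Hb : forall r, visit_times pi v t r -> r <= t by move=> r [[_ Hr] _].
  case: (lub_fin H0 Hb) => g [Hg [H1 [H2 H3]]].
  rewrite /last_visit Hg; have := H1 _ H0; case: H0 => [[H0a _] _] Hg0.
  split; first lra; split => // eps He; left; exact: H3.
- have He : forall r, ~ visit_times pi v t r by move=> r Hr; apply: Hn; exists r.
  rewrite /last_visit lub_empty //; split; first lra.
  split; first by move=> t' Ht'; case: (He _ Ht').
  by move=> eps _; right.
Qed.

Lemma Mw_ge (pi : Strategy V E k) v t : phi v * latency pi v t <= Mw pi t.
Proof. rewrite /weighted_max_latency; apply: (bigmax_ge (P := xpredT)) => //; exact: mem_index_enum. Qed.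

Lemma Mw_le (pi : Strategy V E k) t c : 0 <= c -> (forall v, phi v * latency pi v t <= c) -> Mw pi t <= c.
Proof. move=> Hc H; rewrite /weighted_max_latency; exact: bigmax_le. Qed.

Lemma Mw_ge0 (pi : Strategy V E k) t : 0 <= t -> 0 <= Mw pi t.
Proof. move=> Ht; rewrite /weighted_max_latency; apply: (big_ind (fun x => 0 <= x)).
- lra.
- move=> x y Hx Hy; apply: Rle_trans Hx (Rmax_l _ _).
- move=> v _; apply: Rmult_le_pos; first by apply: Rlt_le.
  rewrite /latency; case: (lv_spec pi v Ht) => H _; lra. Qed.

Lemma dk_ge (p p' : Config V E k) i : d (p i) (p' i) <= dist_k src tgt A p p'.
Proof. rewrite /dist_k; apply: (bigmax_ge (P := xpredT)) => //; exact: mem_index_enum. Qed.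

Lemma dk_le (p p' : Config V E k) c : 0 <= c -> (forall i, d (p i) (p' i) <= c) -> dist_k src tgt A p p' <= c.
Proof. move=> Hc H; rewrite /dist_k; exact: bigmax_le. Qed.

Lemma feas_lip (pi : Strategy V E k) t t' i : feasible src tgt A pi -> 0 <= t -> 0 <= t' ->
  d (pi t i) (pi t' i) <= Rabs (t - t').
Proof. move=> [_ H] Ht Ht'; apply: Rle_trans (dk_ge _ _ i) (H _ _ Ht Ht'). Qed.

Lemma J0_bound (pi : Strategy V E k) j t : J phi (Finite 0) pi = Finite j -> 0 <= t -> Mw pi t <= j.
Proof.
move=> HJ Ht; have := lub_ge (E0 := fun m => exists t, 0 <= t /\ m = Mw pi t) (x := Mw pi t).
rewrite /J /J_fin in HJ; rewrite HJ /=; apply; by exists t.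
Qed.

Lemma J0_le (pi : Strategy V E k) c : (forall t, 0 <= t -> Mw pi t <= c) -> Rbar_le (J phi (Finite 0) pi) c.
Proof. move=> H; apply: lub_le => x [t [Ht ->]]; exact: H. Qed.

End Strat.

Section Diag.
Variables (V E : finType) (src tgt : E -> V) (A : E -> R).
Hypothesis HA : forall e, 0 < A e.
Hypothesis Hconn : connected src tgt.
Local Notation d := (Defs.dist src tgt A).
Local Notation valid := (valid_point A).
Local Notation conv := (conv src tgt A).

Fixpoint diag_psi (Sel : (nat -> Point V E) -> nat -> nat) (X : nat -> nat -> Point V E) (j : nat) : nat -> nat :=
  match j with
  | O => Sel (fun m => X m O)
  | S j' => fun m => diag_psi Sel X j' (Sel (fun m' => X (diag_psi Sel X j' m') (S j')) m)
  end.

Lemma diagonal (X : nat -> nat -> Point V E) : (forall n j, valid (X n j)) ->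
  exists phi, (forall n, (n <= phi n)%coq_nat) /\ forall j, exists l, valid l /\ conv (fun n => X (phi n) j) l.
Proof.
move=> HX.
have Hsel : forall y : nat -> Point V E, exists chi : nat -> nat, (forall n, valid (y n)) ->
    (forall m, (m <= chi m)%coq_nat) /\ exists l, valid l /\ conv (fun m => y (chi m)) l.
  move=> y; case: (classic (forall n, valid (y n))) => Hy.
  - case: (seq_compact HA Hconn Hy) => chi [l [H1 [H2 H3]]]; exists chi => _; split => //; by exists l.
  - by exists (fun m : nat => m) => H.
case: (fchoice Hsel) => Sel HSel.
set psi := diag_psi Sel X.
have P1 : forall j m, (m <= psi j m)%coq_nat.
  elim=> [|j IH] m /=.
  - by case: (HSel (fun m => X m O)) => // H _; apply: H.
  - case: (HSel (fun m' => X (psi j m') (S j))) => // H _.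
    have := H m; have := IH (Sel (fun m' => X (psi j m') (S j)) m); rewrite /psi /=; lia.
have P2 : forall j, exists l, valid l /\ conv (fun m => X (psi j m) j) l.
  case=> [|j] /=.
  - by case: (HSel (fun m => X m O)) => // _ H.
  - by case: (HSel (fun m' => X (psi j m') (S j))) => // _ H.
have P3 : forall j i m, exists q, (m <= q)%coq_nat /\ psi (i + j)%coq_nat m = psi j q.
  move=> j; elim=> [|i IH] m /=; first by exists m; split.
  case: (IH (Sel (fun m' => X (psi (i + j)%coq_nat m') (S (i + j))) m)) => q [Hq Hq'].
  exists q; split; last exact: Hq'.
  case: (HSel (fun m' => X (psi (i + j)%coq_nat m') (S (i + j)))) => // H _.
  have := H m; lia.
exists (fun n => psi n n); split; first by move=> n; apply: P1.
move=> j; case: (P2 j) => l [Hl Hc]; exists l; split => // eps He.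
case: (Hc _ He) => N HN; exists (Nat.max N j) => n Hn.
case: (P3 j (n - j)%coq_nat n) => q [Hq Hq'].
have -> : psi n n = psi j q.
  rewrite -Hq'; congr (psi _ n); lia.
apply: HN; lia.
Qed.

Lemma cauchy_conv (x : nat -> Point V E) : (forall n, valid (x n)) ->
  (forall eps, 0 < eps -> exists N, forall n m, (N <= n)%coq_nat -> (N <= m)%coq_nat -> d (x n) (x m) < eps) ->
  exists l, valid l /\ conv x l.
Proof.
move=> Hx Hc; case: (seq_compact HA Hconn Hx) => chi [l [Hchi [Hl Hconv]]].
exists l; split => // eps He.
have He2 : 0 < eps / 2 by lra.
case: (Hc _ He2) => N1 HN1; case: (Hconv _ He2) => N2 HN2.
exists N1 => n Hn; set m := Nat.max n N2.
have Hm : (N2 <= m)%coq_nat by rewrite /m; lia.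
have Hcm : (N1 <= chi m)%coq_nat by have := Hchi m; rewrite /m in Hm *; lia.
case: (HN2 m Hm) => H1 H2.
have H3 := HN1 n (chi m) Hn Hcm; have H4 := HN1 (chi m) n Hcm Hn.
split.
- apply: Rle_lt_trans (gd_tri HA Hconn (Hx n) (Hx (chi m)) Hl) _; lra.
- apply: Rle_lt_trans (gd_tri HA Hconn Hl (Hx (chi m)) (Hx n)) _; lra.
Qed.

End Diag.

Lemma le_eps a b : (forall eps, 0 < eps -> a <= b + eps) -> a <= b.
Proof. move=> H; apply: Rnot_lt_le => Hlt; have := H ((a - b) / 2) ltac:(lra); lra. Qed.

Section Opt.
Variables (V E : finType) (src tgt : E -> V) (A : E -> R) (phi : V -> R) (k : nat).
Hypothesis HA : forall e, 0 < A e.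
Hypothesis Hconn : connected src tgt.
Hypothesis Hphi : forall v, 0 < phi v.
Variable i0 : 'I_k.

Local Notation d := (Defs.dist src tgt A).
Local Notation valid := (valid_point A).
Local Notation conv := (conv src tgt A).
Local Notation Mw := (weighted_max_latency phi (k:=k)).
Local Notation Tr := (gd_tri HA Hconn).

Definition time (m l : nat) := INR m / (INR l + 1).
Lemma time_ge0 m l : 0 <= time m l.
Proof. rewrite /time; apply: Rdiv_le_0_compat; [exact: pos_INR | have := pos_INR l; lra]. Qed.

Lemma Jstar_approx Js : Jstar src tgt A phi k (Finite 0) = Finite Js ->
  0 <= Js /\ forall eps, 0 < eps -> exists pi, feasible src tgt A pi /\ forall t, 0 <= t -> Mw pi t <= Js + eps.
Proof.
rewrite /Jstar /Rbar_inf => HJ.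
set S := (fun r : R => exists pi, feasible src tgt A pi /\ Finite r = J phi (Finite 0) pi) in HJ.
case: (Glb_Rbar_correct S); rewrite HJ => lb glb; split.
- apply: (glb (Finite 0)) => r [pi [Hf Hr]] /=.
  have := Mw_ge0 Hphi pi (Rle_refl 0); have := J0_bound (Logic.eq_sym Hr) (Rle_refl 0); lra.
- move=> eps He; apply: NNPP => Hn.
  have : Js + eps <= Js; last lra.
  apply: (glb (Finite (Js + eps))) => r [pi [Hf Hr]] /=; apply: Rnot_lt_le => Hlt; apply: Hn.
  exists pi; split => // t Ht; have := J0_bound (Logic.eq_sym Hr) Ht; lra.
Qed.

Theorem exists_opt Js : Jstar src tgt A phi k (Finite 0) = Finite Js ->
  exists pi, feasible src tgt A pi /\ forall t, 0 <= t -> Mw pi t <= Js.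
Proof.
move=> HJ; case: (Jstar_approx HJ) => HJs Happ.
have Hseq : forall n : nat, exists pi, feasible src tgt A pi /\ forall t, 0 <= t -> Mw pi t <= Js + / (INR n + 1).
  move=> n; apply: Happ; apply: Rinv_0_lt_compat; have := pos_INR n; lra.
case: (fchoice Hseq) => sq Hsq.
pose X (n j : nat) : Point V E :=
  match @pickle_inv (nat * nat * 'I_k)%type j with
  | Some p => sq n (time p.1.1 p.1.2) p.2
  | None => sq n 0 i0 end.
have HX : forall n j, valid (X n j).
  move=> n j; rewrite /X; case: (Hsq n) => [[Hv _] _].
  case: pickle_inv => [p|]; apply: Hv; [exact: time_ge0 | lra].
case: (diagonal HA Hconn HX) => sub [Hsub Hdiag].
pose rho n := sq (sub n).
have Hrho : forall n, feasible src tgt A (rho n) /\ forall t, 0 <= t -> Mw (rho n) t <= Js + / (INR n + 1).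
  move=> n; case: (Hsq (sub n)) => Hf Hb; split => // t Ht; apply: Rle_trans (Hb t Ht) _.
  apply: Rplus_le_compat_l; apply: Rinv_le_contravar; first by have := pos_INR n; lra.
  have := le_INR _ _ (Hsub n); lra.
have Hvalid : forall n t i, 0 <= t -> valid (rho n t i).
  by move=> n t i Ht; case: (Hrho n) => [[Hv _] _]; apply: Hv.
have Hlip : forall n t t' i, 0 <= t -> 0 <= t' -> d (rho n t i) (rho n t' i) <= Rabs (t - t').
  by move=> n t t' i Ht Ht'; case: (Hrho n) => Hf _; apply: feas_lip.
have Hq : forall m l i, exists lq, valid lq /\ conv (fun n => rho n (time m l) i) lq.
  move=> m l i; case: (Hdiag (pickle (m, l, i))) => lq [H1 H2]; exists lq; split => //.
  by move: H2; rewrite /X pickleK_inv.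
have Hlim : forall p : R * 'I_k, exists l, 0 <= p.1 -> valid l /\ conv (fun n => rho n p.1 p.2) l.
  move=> [t i] /=; case: (classic (0 <= t)) => Ht; last by exists (rho 0%nat 0 i) => H.
  suff [l Hl] : exists l, valid l /\ conv (fun n => rho n t i) l by exists l.
  apply: (cauchy_conv HA Hconn) => [n|eps He]; first exact: Hvalid.
  have He4 : 0 < eps / 4 by lra.
  case: (dense_time Ht He4) => m [l Hml].
  case: (Hq m l i) => lq [Hlq Hc]; case: (Hc _ He4) => N HN.
  exists N => n n' Hn Hn'.
  have Htq := time_ge0 m l.
  have A1 := Hlip n t (time m l) i Ht Htq.
  have A2 := Hlip n' (time m l) t i Htq Ht.
  rewrite Rabs_minus_sym in A2.
  case: (HN n Hn) => B1 _; case: (HN n' Hn') => _ B2.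
  have T1 := Tr (Hvalid n t i Ht) (Hvalid n (time m l) i Htq) (Hvalid n' t i Ht).
  have T2 := Tr (Hvalid n (time m l) i Htq) Hlq (Hvalid n' t i Ht).
  have T3 := Tr Hlq (Hvalid n' (time m l) i Htq) (Hvalid n' t i Ht).
  have Hml2 : Rabs (t - time m l) < eps / 4 by exact: Hml.
  lra.
case: (fchoice Hlim) => f Hf.
pose pi : Strategy V E k := fun t i => f (t, i).
have Hpi : forall t i, 0 <= t -> valid (pi t i) /\ conv (fun n => rho n t i) (pi t i).
  by move=> t i Ht; apply: (Hf (t, i)).
exists pi; split.
  split; first by move=> t Ht i; case: (Hpi t i Ht).
  move=> t t' Ht Ht'; apply: dk_le; first exact: Rabs_pos.
  move=> i; apply: le_eps => eps He.
  have He2 : 0 < eps / 2 by lra.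
  case: (Hpi t i Ht) => Hv1 Hc1; case: (Hpi t' i Ht') => Hv2 Hc2.
  case: (Hc1 _ He2) => N1 HN1; case: (Hc2 _ He2) => N2 HN2.
  set n := Nat.max N1 N2.
  case: (HN1 n ltac:(rewrite /n; lia)) => _ C1; case: (HN2 n ltac:(rewrite /n; lia)) => C2 _.
  have := Hlip n t t' i Ht Ht'.
  have T1 := Tr Hv1 (Hvalid n t i Ht) Hv2.
  have T2 := Tr (Hvalid n t i Ht) (Hvalid n t' i Ht') Hv2.
  lra.
(* lower semicontinuity *)
move=> t Ht; apply: Mw_le => // v.
have Hpv := Hphi v.
set L := Js / phi v.
suff : latency pi v t <= L.
  move=> Hl; have := Rmult_le_compat_l (phi v) _ _ (Rlt_le _ _ Hpv) Hl.
  by rewrite /L; replace (phi v * (Js / phi v)) with Js by (field; lra).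
set c := / phi v + 1.
have Hc : 0 < c by rewrite /c; have := Rinv_0_lt_compat _ Hpv; lra.
pose Good n := exists r tau, 0 <= tau <= t /\ rho n tau r = PV E v /\ t - L - c * / (INR n + 1) < tau.
have HG : forall n, Good n \/ t <= L + c * / (INR n + 1).
  move=> n; have Hin : 0 < / (INR n + 1) by apply: Rinv_0_lt_compat; have := pos_INR n; lra.
  have Hlat : latency (rho n) v t <= L + / phi v * / (INR n + 1).
    case: (Hrho n) => _ Hb; have := Rle_trans _ _ _ (Mw_ge phi (rho n) v t) (Hb t Ht).
    move=> H1; apply: (Rmult_le_reg_l (phi v)) => //.
    rewrite /L; replace (phi v * (Js / phi v + / phi v * / (INR n + 1))) with (Js + / (INR n + 1)) by (field; split; [have := pos_INR n|]; lra).
    exact: H1.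
  rewrite /latency in Hlat.
  case: (lv_spec (rho n) v Ht) => _ [_ H3]; case: (H3 _ Hin) => [[t' [[Ht' [r Hr]] Hlt]]|[H0 _]].
  - left; exists r, t'; split => //; split => //; rewrite /c; lra.
  - right; rewrite H0 in Hlat; have : 0 <= / phi v * / (INR n + 1) by apply: Rmult_le_pos; apply: Rlt_le; [apply: Rinv_0_lt_compat; lra | exact: Hin].
    rewrite /c; lra.
case: (lv_spec pi v Ht) => [[Hlv0 Hlvt] [Hlv2 _]]; rewrite /latency.
case: (classic (exists N, forall n, (N <= n)%coq_nat -> Good n)) => [[N HN]|HnG]; last first.
  have : t <= L.
    apply: (lim_le_inf Hc) => N; apply: NNPP => Hn; apply: HnG; exists N => n Hn'.
    case: (HG n) => // H; exfalso; apply: Hn; by exists n.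
  lra.
have Hch : forall n, exists p : 'I_k * R, 0 <= p.2 <= t /\ rho (n + N)%coq_nat p.2 p.1 = PV E v /\
              t - L - c * / (INR (n + N)%coq_nat + 1) < p.2.
  move=> n; case: (HN (n + N)%coq_nat ltac:(lia)) => r [tau H]; by exists (r, tau).
case: (fchoice Hch) => g Hg.
case: (pigeon (fun n => (g n).1)) => r0 Hr0.
case: (inf_sub Hr0) => chi1 Hchi1.
case: (BW (u := fun m => (g (chi1 m)).2) (lo := 0) (hi := t)) => [m|chi2 [ts [Hchi2 [Hts Hconv]]]].
  by case: (Hg (chi1 m)).
pose psi m := chi1 (chi2 m).
have Hpsi : forall m, (m <= psi m)%coq_nat.
  move=> m; rewrite /psi; case: (Hchi1 (chi2 m)) => H _; have := Hchi2 m; lia.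
have Hvis : pi ts r0 = PV E v.
  apply: (gd_node HA Hconn) => [|eps He]; first by case: (Hpi ts r0 (proj1 Hts)).
  have He2 : 0 < eps / 2 by lra.
  case: (Hpi ts r0 (proj1 Hts)) => Hv Hcv; case: (Hcv _ He2) => N1 HN1.
  case: (Hconv _ He2) => N2 HN2.
  set m := Nat.max N1 N2; set n := (psi m + N)%coq_nat.
  case: (HN1 n ltac:(have := Hpsi m; rewrite /n /m; lia)) => _ C1.
  have C2 := HN2 m ltac:(rewrite /m; lia).
  case: (Hg (psi m)) => [Hg1 [Hg2 _]].
  case: (Hchi1 (chi2 m)) => _ Hr; rewrite -/(psi m) in Hr; rewrite Hr in Hg2.
  have Hvv : valid (PV E v) by [].
  have T1 := Tr Hv (Hvalid n ts r0 (proj1 Hts)) Hvv.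
  have T2 := Tr (Hvalid n ts r0 (proj1 Hts)) (Hvalid n (g (psi m)).2 r0 (proj1 Hg1)) Hvv.
  have L1 := Hlip n ts (g (psi m)).2 r0 (proj1 Hts) (proj1 Hg1).
  rewrite Rabs_minus_sym in L1.
  rewrite /n Hg2 in T2 L1 C1 T1; have := gd_refl HA Hconn Hvv.
  change (g (chi1 (chi2 m))) with (g (psi m)) in C2; lra.
have Hts_ge : t - L <= ts.
  apply: le_eps => eps He.
  have He2 : 0 < eps / 2 by lra.
  have He3 : 0 < eps / 2 / c by apply: Rdiv_lt_0_compat.
  case: (Hconv _ He2) => N2 HN2; case: (small_inv He3) => N3 HN3.
  set m := Nat.max N2 N3.
  have C2 := HN2 m ltac:(rewrite /m; lia).
  have C3 := HN3 (psi m + N)%coq_nat ltac:(have := Hpsi m; rewrite /m; lia).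
  case: (Hg (psi m)) => _ [_ Hg3].
  have : c * / (INR (psi m + N)%coq_nat + 1) < eps / 2.
    have := Rmult_lt_compat_l c _ _ Hc C3.
    by replace (c * (eps / 2 / c)) with (eps / 2) by (field; lra).
  move: C2; rewrite /psi => C2; have := Rle_abs ((g (chi1 (chi2 m))).2 - ts); rewrite /psi in Hg3 *; lra.
have : ts <= last_visit pi v t by apply: Hlv2; split => //; by exists r0.
lra.
Qed.

End Opt.

Lemma glb_le_elem (S : R -> Prop) r : S r -> Rbar_le (Glb_Rbar S) r.
Proof. by case: (Glb_Rbar_correct S) => lb _ H; apply: lb. Qed.

Lemma glb_ge (S : R -> Prop) (m : Rbar) : (forall r, S r -> Rbar_le m r) -> Rbar_le m (Glb_Rbar S).
Proof. by case: (Glb_Rbar_correct S) => _ glb H; apply: glb. Qed.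

Lemma glb_approx (S : R -> Prop) g : Glb_Rbar S = Finite g -> forall eps, 0 < eps -> exists r, S r /\ r < g + eps.
Proof.
move=> Hg eps He; apply: NNPP => Hn.
have : Rbar_le (g + eps) (Glb_Rbar S); last by rewrite Hg /=; lra.
apply: glb_ge => r Hr /=; apply: Rnot_lt_le => Hlt; apply: Hn; by exists r.
Qed.

Lemma glb_cmp (S1 S2 : R -> Prop) : (forall r, S1 r -> forall eps, 0 < eps -> exists r', S2 r' /\ r' <= r + eps) ->
  Rbar_le (Glb_Rbar S2) (Glb_Rbar S1).
Proof.
move=> H; apply: glb_ge => r Hr.
case E: (Glb_Rbar S2) => [g| |] //=.
- apply: le_eps => eps He; case: (H r Hr eps He) => r' [H1 H2].
  have := glb_le_elem H1; rewrite E /=; lra.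
- case: (H r Hr 1 Rlt_0_1) => r' [H1 _]; have := glb_le_elem H1; by rewrite E.
Qed.

Lemma lub_mono (E1 E2 : R -> Prop) : (forall x, E1 x -> E2 x) -> Rbar_le (Lub_Rbar E1) (Lub_Rbar E2).
Proof.
move=> H; case: (Lub_Rbar_correct E1) => _ lub; apply: lub => x Hx.
exact: lub_ge (H x Hx).
Qed.

Section Parts12.
Variables (V E : finType) (src tgt : E -> V) (A : E -> R) (phi : V -> R) (k : nat).
Hypothesis HA : forall e, 0 < A e.
Hypothesis Hconn : connected src tgt.
Hypothesis Hphi : forall v, 0 < phi v.

Local Notation d := (Defs.dist src tgt A).
Local Notation valid := (valid_point A).
Local Notation Mw := (weighted_max_latency phi (k:=k)).
Local Notation feas := (feasible src tgt A (k:=k)).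
Local Notation SS T := (fun r : R => exists pi, feas pi /\ Finite r = J phi T pi).

Lemma shift_feas (pi : Strategy V E k) s : 0 <= s -> feas pi -> feas (fun t => pi (t + s)).
Proof.
move=> Hs [Hv Hl]; split; first by move=> t Ht; apply: Hv; lra.
move=> t t' Ht Ht'; have := Hl (t + s) (t' + s) ltac:(lra) ltac:(lra).
by replace (t + s - (t' + s)) with (t - t') by ring.
Qed.

Lemma shift_lat (pi : Strategy V E k) s v t : 0 <= s -> 0 <= t ->
  latency (fun t => pi (t + s)) v t <= latency pi v (t + s).
Proof.
move=> Hs Ht; rewrite /latency.
have Hts : 0 <= t + s by lra.
case: (lv_spec pi v Hts) => [[H0 H1] [H2 H3]].
case: (lv_spec (fun t => pi (t + s)) v Ht) => [[G0 G1] [G2 G3]].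
suff : last_visit pi v (t + s) - s <= last_visit (fun t => pi (t + s)) v t by lra.
apply: le_eps => eps He; case: (H3 _ He) => [[t' [[Ht' [r Hr]] Hlt]]|[Hz _]]; last lra.
case: (Rle_dec s t') => Hst; last lra.
have : t' - s <= last_visit (fun t => pi (t + s)) v t.
  apply: G2; split; first lra; exists r; by replace (t' - s + s) with t' by ring.
lra.
Qed.

Lemma J_ge0 (pi : Strategy V E k) T : Rbar_le 0 T -> Rbar_le 0 (J phi T pi).
Proof.
case: T => [T| |] HT //; simpl in HT.
- have H := lub_ge (E0 := fun m => exists t, T <= t /\ m = Mw pi t) (x := Mw pi T) ltac:(exists T; split => //; lra).
  apply: (Rbar_le_trans _ (Finite (Mw pi T))); first exact: (Mw_ge0 Hphi pi HT).
  exact: H.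
- rewrite /J /Rbar_inf; apply: glb_ge => r [T0 [HT0 Hr]].
  have := lub_ge (E0 := fun m => exists t, T0 <= t /\ m = Mw pi t) (x := Mw pi T0).
  rewrite /J_fin in Hr; rewrite -Hr /=; move=> H; have := H ltac:(exists T0; split => //; lra).
  have := Mw_ge0 Hphi pi HT0; lra.
Qed.

Lemma J_mono (pi : Strategy V E k) T1 T2 : Rbar_le 0 T1 -> Rbar_lt T1 T2 -> Rbar_le (J phi T2 pi) (J phi T1 pi).
Proof.
case: T1 => [T1| |] H1 H12 //.
case: T2 H12 => [T2| |] H12 //.
all: simpl in H1, H12.
- rewrite /J /J_fin; apply: lub_mono => x [t [Ht ->]]; exists t; split => //; lra.
- rewrite /J /Rbar_inf; case E1: (J_fin phi pi T1) => [j| |] //.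
  + apply: glb_le_elem; by exists T1.
  + by case: (Glb_Rbar _).
  + have := J_ge0 pi (T := Finite T1) H1; rewrite /J E1; by [].
Qed.

Lemma Jstar_le (pi : Strategy V E k) T : Rbar_le 0 T -> feas pi -> Rbar_le (Jstar src tgt A phi k T) (J phi T pi).
Proof.
move=> HT Hf; case E1: (J phi T pi) => [j| |] //.
- rewrite /Jstar /Rbar_inf; apply: glb_le_elem; by exists pi.
- by case: (Jstar _ _ _ _ _ _).
- by have := J_ge0 pi HT; rewrite E1.
Qed.

Lemma shift_J0 (pi : Strategy V E k) s : 0 <= s -> feas pi ->
  Rbar_le (J phi (Finite 0) (fun t => pi (t + s))) (J_fin phi pi s).
Proof.
move=> Hs Hf; case E1: (J_fin phi pi s) => [j| |].
2: by case: (J _ _ _).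
2: have := J_ge0 pi (T := Finite s) Hs; rewrite /J E1; by [].
apply: J0_le => t Ht; apply: Mw_le.
  have := Mw_ge0 Hphi (fun t => pi (t + s)) Ht; have := J_ge0 pi (T := Finite s) Hs.
  rewrite /= E1 => H1 H2; exact: H1.
move=> v; apply: Rle_trans (Rmult_le_compat_l _ _ _ (Rlt_le _ _ (Hphi v)) (shift_lat pi v Hs Ht)) _.
apply: Rle_trans (Mw_ge phi pi v (t + s)) _.
have := lub_ge (E0 := fun m => exists t', s <= t' /\ m = Mw pi t') (x := Mw pi (t + s)).
rewrite /J_fin in E1; rewrite E1 /=; apply; exists (t + s); split => //; lra.
Qed.

Lemma fin_of (x : Rbar) (c : R) : Rbar_le 0 x -> Rbar_le x c -> exists r, x = Finite r /\ r <= c.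
Proof. case: x => [r| |] //= H1 H2; by exists r. Qed.

Lemma rbar_cases (T : Rbar) : Rbar_le 0 T -> Rbar_lt 0 T \/ T = Finite 0.
Proof.
case: T => [T| |] HT //; last by left.
simpl in HT; case: (Rle_lt_or_eq_dec _ _ HT) => H; [by left | by right; rewrite -H].
Qed.

Lemma part1 T : Rbar_le 0 T -> Jstar src tgt A phi k T = Jstar src tgt A phi k (Finite 0).
Proof.
move=> HT; rewrite /Jstar /Rbar_inf; apply: Rbar_le_antisym.
- apply: glb_cmp => r [pi [Hf Hr]] eps He.
  have Hm := rbar_cases HT.
  case: Hm => [Hlt|->]; last by exists r; split; [exists pi | lra].
  have := J_mono pi (Rbar_le_refl 0) Hlt; rewrite -Hr => Hle.
  case: (fin_of (J_ge0 pi HT) Hle) => r' [Hr' Hle']; exists r'; split; last lra.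
  by exists pi.
- apply: glb_cmp => r [pi [Hf Hr]] eps He.
  have [s [Hs Hsr]] : exists s, 0 <= s /\ Rbar_le (J_fin phi pi s) (r + eps).
    case: T HT Hr => [T| |] //= HT Hr.
    + exists T; split => //; rewrite -Hr /=; lra.
    + rewrite /Rbar_inf in Hr; case: (glb_approx (Logic.eq_sym Hr) He) => r0 [[T0 [HT0 Hr0]] Hlt].
      exists T0; split => //; rewrite -Hr0 /=; lra.
  have Hf' := shift_feas Hs Hf.
  have H1 := Rbar_le_trans _ _ _ (shift_J0 Hs Hf) Hsr.
  case: (fin_of (J_ge0 (fun t => pi (t + s)) (T := Finite 0) (Rle_refl 0)) H1) => r' [Hr' Hle'].
  exists r'; split => //; by exists (fun t => pi (t + s)).
Qed.

Lemma part2 T1 T2 : Rbar_le 0 T1 -> Rbar_lt T1 T2 -> forall pi : Strategy V E k,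
  optimal (k:=k) src tgt A phi T1 pi -> optimal (k:=k) src tgt A phi T2 pi.
Proof.
move=> H1 H12 pi [Hf HJ]; split => //.
have H2 : Rbar_le 0 T2 by apply: Rbar_le_trans H1 (Rbar_lt_le _ _ H12).
have HJs : Jstar src tgt A phi k T2 = Jstar src tgt A phi k T1 by rewrite part1 // part1.
apply: Rbar_le_antisym.
- rewrite HJs -HJ; exact: J_mono.
- exact: Jstar_le.
Qed.

End Parts12.

Definition cl (a w : R) := Rmax 0 (Rmin w a).

Lemma cl_range a w : 0 <= a -> 0 <= cl a w <= a.
Proof. rewrite /cl /Rmax /Rmin => Ha; repeat destruct Rle_dec; lra. Qed.

Lemma cl_lip a w w' : 0 <= a -> Rabs (cl a w - cl a w') <= Rabs (w - w').
Proof. rewrite /cl /Rmax /Rmin => Ha; repeat destruct Rle_dec; split_Rabs; lra. Qed.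

Lemma cl0 a : 0 <= a -> cl a 0 = 0.
Proof. rewrite /cl /Rmax /Rmin => Ha; repeat destruct Rle_dec; lra. Qed.

Lemma cl_top a w : 0 <= a -> a <= w -> cl a w = a.
Proof. rewrite /cl /Rmax /Rmin => Ha Hw; repeat destruct Rle_dec; lra. Qed.

Section Curves.
Variables (V E : finType) (src tgt : E -> V) (A : E -> R).
Hypothesis HA : forall e, 0 < A e.
Hypothesis Hconn : connected src tgt.
Local Notation d := (Defs.dist src tgt A).
Local Notation valid := (valid_point A).
Local Notation PL := (path_length src tgt A).
Local Notation Tr := (gd_tri HA Hconn).
Local Notation pt := (pt src tgt A).

Definition iscurve (x y : Point V E) (l : R) (g : R -> Point V E) :=
  0 <= l /\ (forall u, valid (g u)) /\ (forall u u', d (g u) (g u') <= Rabs (u - u')) /\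
  g 0 = x /\ (forall u, l <= u -> g u = y).

Lemma pt_int e s : 0 < s < A e -> pt e s = PE V e s.
Proof. move=> Hs; rewrite /pt; case: Rle_dec => H1; first lra; case: Rle_dec => // H2; lra. Qed.

Lemma pt_0 e : pt e 0 = PV E (src e).
Proof. rewrite /pt; case: Rle_dec => // H1; lra. Qed.

Lemma pt_A e : pt e (A e) = PV E (tgt e).
Proof. have := HA e; rewrite /pt; case: Rle_dec => H1 H2; first lra; case: Rle_dec => // H3; lra. Qed.

Definition seg e u1 u2 (w : R) :=
  pt e (if Rle_dec u1 u2 then u1 + cl (u2 - u1) w else u1 - cl (u1 - u2) w).

Lemma seg_curve e u1 u2 : 0 <= u1 <= A e -> 0 <= u2 <= A e ->
  iscurve (pt e u1) (pt e u2) (Rabs (u2 - u1)) (seg e u1 u2).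
Proof.
move=> H1 H2; rewrite /seg; case: Rle_dec => H12 /=.
- have Ha : 0 <= u2 - u1 by lra.
  split; first exact: Rabs_pos.
  split; first by move=> u; exact: pt_valid.
  split.
    move=> u u'; have := cl_range u Ha; have := cl_range u' Ha => R1 R2.
    apply: Rle_trans (pt_dist HA Hconn _ _) _; try lra.
    replace (u1 + cl (u2 - u1) u - (u1 + cl (u2 - u1) u')) with (cl (u2 - u1) u - cl (u2 - u1) u') by ring.
    exact: cl_lip.
  split; first by rewrite cl0 // Rplus_0_r.
  move=> u; rewrite Rabs_right; last lra.
  move=> Hu; rewrite cl_top //; congr (pt e _); ring.
- have Ha : 0 <= u1 - u2 by lra.
  split; first exact: Rabs_pos.
  split; first by move=> u; exact: pt_valid.
  split.
    move=> u u'; have := cl_range u Ha; have := cl_range u' Ha => R1 R2.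
    apply: Rle_trans (pt_dist HA Hconn _ _) _; try lra.
    replace (u1 - cl (u1 - u2) u - (u1 - cl (u1 - u2) u')) with (- (cl (u1 - u2) u - cl (u1 - u2) u')) by ring.
    rewrite Rabs_Ropp; exact: cl_lip.
  split; first by rewrite cl0 // Rminus_0_r.
  move=> u; rewrite Rabs_left; last lra.
  move=> Hu; rewrite cl_top //; try lra; congr (pt e _); ring.
Qed.

Lemma const_curve x : valid x -> iscurve x x 0 (fun _ => x).
Proof.
move=> Hx; split; first lra; split => //; split => // u u'.
have := gd_refl HA Hconn Hx; have := Rabs_pos (u - u'); lra.
Qed.

Lemma concat_curve x y z a b g1 g2 : iscurve x y a g1 -> iscurve y z b g2 ->
  iscurve x z (a + b) (fun u => if Rle_dec u a then g1 u else g2 (u - a)).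
Proof.
move=> [Ha [V1 [L1 [S1 E1]]]] [Hb [V2 [L2 [S2 E2]]]].
have Hy : g1 a = g2 0 by rewrite E1 ?S2 //; lra.
split; first lra.
split; first by move=> u; case: Rle_dec => Hq; [exact: V1 | exact: V2].
split.
  move=> u u'; case: Rle_dec => Hu /=; case: Rle_dec => Hu' /=.
  + exact: L1.
  + have T := Tr (V1 u) (V2 0) (V2 (u' - a)).
    have := L1 u a; rewrite Hy => H1; have H2 := L2 0 (u' - a).
    have : Rabs (u - a) + Rabs (0 - (u' - a)) = Rabs (u - u') by split_Rabs; lra.
    lra.
  + have T := Tr (V2 (u - a)) (V2 0) (V1 u').
    have := L1 a u'; rewrite Hy => H1; have H2 := L2 (u - a) 0.
    have : Rabs (u - a - 0) + Rabs (a - u') = Rabs (u - u') by split_Rabs; lra.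
    lra.
  + replace (u - u') with (u - a - (u' - a)) by ring; exact: L2.
split; first by case: Rle_dec => H /=; [exact: S1 | lra].
move=> u Hu; case: Rle_dec => H /=.
- have Hb0 : b = 0 by lra.
  have := E2 0 ltac:(lra); rewrite S2 => <-; apply: E1; lra.
- apply: E2; lra.
Qed.

Lemma walk_curve u w v : is_walk src tgt u w v -> exists g, iscurve (PV E u) (PV E v) (walk_len A w) g.
Proof.
elim: w u => [|[e b] w IH] u /=.
- move=> ->; exists (fun _ => PV E v); exact: const_curve.
- move=> [Hu Hw]; case: (IH _ Hw) => g Hg.
  have He := HA e.
  case: b Hu Hw Hg => Hu Hw Hg.
  + have Hs := seg_curve (e := e) (u1 := 0) (u2 := A e) ltac:(lra) ltac:(lra).
    rewrite pt_0 pt_A Hu Rminus_0_r Rabs_right in Hs; last lra.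
    eexists; exact: concat_curve Hs Hg.
  + have Hs := seg_curve (e := e) (u1 := A e) (u2 := 0) ltac:(lra) ltac:(lra).
    rewrite pt_0 pt_A Hu Rminus_0_l Rabs_Ropp Rabs_right in Hs; last lra.
    eexists; exact: concat_curve Hs Hg.
Qed.

Lemma anchor_curve x a o : valid x -> anchor src tgt A x a o ->
  (exists g, iscurve x (PV E a) o g) /\ (exists g, iscurve (PV E a) x o g).
Proof.
case: x => [v|e s] /=.
- move=> _ [-> ->]; split; exists (fun _ => PV E v); exact: const_curve.
- move=> Hs [[-> ->]|[-> ->]].
  + have H1 := seg_curve (e := e) (u1 := s) (u2 := 0) ltac:(lra) ltac:(lra).
    have H2 := seg_curve (e := e) (u1 := 0) (u2 := s) ltac:(lra) ltac:(lra).
    rewrite pt_0 pt_int // Rminus_0_l Rabs_Ropp Rabs_right in H1; last lra.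
    rewrite pt_0 pt_int // Rminus_0_r Rabs_right in H2; last lra.
    split; eexists; eassumption.
  + have H1 := seg_curve (e := e) (u1 := s) (u2 := A e) ltac:(lra) ltac:(lra).
    have H2 := seg_curve (e := e) (u1 := A e) (u2 := s) ltac:(lra) ltac:(lra).
    rewrite pt_A pt_int // Rabs_right in H1; last lra.
    rewrite pt_A pt_int // Rabs_left in H2; last lra.
    replace (- (s - A e)) with (A e - s) in H2 by ring.
    split; eexists; eassumption.
Qed.

Lemma PL_curve x y r : valid x -> valid y -> PL x y r -> exists g, iscurve x y r g.
Proof.
move=> Hx Hy [[e [s [s' [Ex [Ey ->]]]]]|[a [oa [b [ob [w [Ha [Hb [Hw ->]]]]]]]]].
- subst x y; simpl in Hx, Hy.
  have H := seg_curve (e := e) (u1 := s) (u2 := s') ltac:(lra) ltac:(lra).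
  rewrite !pt_int // Rabs_minus_sym in H; by exists (seg e s s').
- case: (anchor_curve Hx Ha) => [[g1 H1] _]; case: (anchor_curve Hy Hb) => [_ [g3 H3]].
  case: (walk_curve Hw) => g2 H2.
  eexists; exact: concat_curve (concat_curve H1 H2) H3.
Qed.

End Curves.

Section Part3.
Variables (V E : finType) (src tgt : E -> V) (A : E -> R) (phi : V -> R) (k : nat).
Hypothesis HV : inhabited V.
Hypothesis HA : forall e, 0 < A e.
Hypothesis Hconn : connected src tgt.
Hypothesis Hphi : forall v, 0 < phi v.
Variable i0 : 'I_k.

Local Notation d := (Defs.dist src tgt A).
Local Notation valid := (valid_point A).
Local Notation Mw := (weighted_max_latency phi (k:=k)).
Local Notation feas := (feasible src tgt A (k:=k)).
Local Notation Tr := (gd_tri HA Hconn).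

Lemma phimin_spec : 0 < phi_min phi /\ forall v, phi_min phi <= phi v.
Proof.
case: HV => v0; case: (fin_min Hphi) => dl [Hdl Hdle].
have H0 : (fun r => exists v, r = phi v) (phi v0) by exists v0.
have Hlb : forall r, (fun r => exists v, r = phi v) r -> dl <= r by move=> r [v ->].
case: (glb_fin H0 Hlb) => g [Hg [H1 [H2 _]]].
rewrite /phi_min Hg /=; split; first lra.
move=> v; apply: H2; by exists v.
Qed.

Lemma Jstar0_ge0 : Rbar_le 0 (Jstar src tgt A phi k (Finite 0)).
Proof.
rewrite /Jstar /Rbar_inf; apply: glb_ge => r [pi [Hf Hr]].
have := J_ge0 Hphi pi (T := Finite 0) (Rle_refl 0); by rewrite -Hr.
Qed.

Lemma part3 (p0 : Config V E k) : valid_config A p0 -> forall T : R,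
  Rbar_lt (Rbar_plus (diameter src tgt A)
            (Rbar_mult (Jstar src tgt A phi k (Finite 0)) (Finite (/ phi_min phi)))) (Finite T) ->
  exists pi, optimal (k:=k) src tgt A phi (Finite T) pi /\ forall i, pi 0 i = p0 i.
Proof.
move=> Hp0 T HT.
case: phimin_spec => Hpm Hpmle; set pm := phi_min phi in Hpm Hpmle HT.
case: HV => v0.
have Hvv0 : valid (PV E v0) by [].
have Hdiam : forall x y, valid x -> valid y -> Rbar_le (d x y) (diameter src tgt A).
  move=> x y Hx Hy; apply: lub_ge; by exists x, y.
have Hd0 := Hdiam _ _ Hvv0 Hvv0.
have HJ0 := Jstar0_ge0.
have Hipm : 0 < / pm by apply: Rinv_0_lt_compat.
case EJ: (Jstar src tgt A phi k (Finite 0)) HT HJ0 => [j| |] HT HJ0 //; last first.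
  exfalso; move: HT; rewrite /Rbar_mult /=; case: Rle_dec => H1; last lra.
  case: Rle_lt_or_eq_dec => H2 /=; last lra.
  by case E1: (diameter src tgt A) Hd0 => [D| |].
simpl in HJ0.
case ED: (diameter src tgt A) Hd0 Hdiam HT => [Dg| |] Hd0 Hdiam HT.
2: by simpl in HT.
2: by simpl in Hd0.
simpl in HT, Hd0.
have Hd0' : 0 <= Dg by have := gd_ge0 HA Hconn Hvv0 Hvv0; lra.
have Hdg : forall x y, valid x -> valid y -> d x y <= Dg by move=> x y Hx Hy; exact: (Hdiam x y Hx Hy).
case: (exists_opt HA Hconn Hphi i0 EJ) => ps [Hps Hpsb].
set c := (Dg + (T - j * / pm)) / 2.
have Hc1 : Dg < c by rewrite /c; lra.
have Hc2 : c + j * / pm < T by rewrite /c; lra.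
have Hcurve : forall i, exists g, exists r, r <= c /\ iscurve src tgt A (p0 i) (ps 0 i) r g.
  move=> i; have Hx := Hp0 i; have Hy : valid (ps 0 i) by case: Hps => Hv _; apply: Hv; lra.
  case: (gd_spec HA Hconn Hx Hy) => _ [_ [Happ _]].
  case: (Happ (c - Dg) ltac:(lra)) => r [Hr Hrl].
  case: (PL_curve HA Hconn Hx Hy Hr) => g Hg; exists g, r; split => //.
  have := Hdg _ _ Hx Hy; lra.
case: (fchoice Hcurve) => G HG.
have HGv : forall i u, valid (G i u) by move=> i u; case: (HG i) => r [_ [_ [H _]]].
have HGl : forall i u u', d (G i u) (G i u') <= Rabs (u - u') by move=> i u u'; case: (HG i) => r [_ [_ [_ [H _]]]].
have HG0 : forall i, G i 0 = p0 i by move=> i; case: (HG i) => r [_ [_ [_ [_ [H _]]]]].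
have HGe : forall i u, c <= u -> G i u = ps 0 i.
  by move=> i u Hu; case: (HG i) => r [Hrc [_ [_ [_ [_ H]]]]]; apply: H; lra.
have Hpsv : forall t i, 0 <= t -> valid (ps t i) by case: Hps => Hv _ t i Ht; apply: Hv.
have Hpsl : forall t t' i, 0 <= t -> 0 <= t' -> d (ps t i) (ps t' i) <= Rabs (t - t').
  by move=> t t' i Ht Ht'; apply: feas_lip.
pose pn : Strategy V E k := fun t i => if Rle_dec t c then G i t else ps (t - c) i.
have Hpn_shift : forall t' i, 0 <= t' -> pn (t' + c) i = ps t' i.
  move=> t' i Ht'; rewrite /pn; case: Rle_dec => H /=.
  - have -> : t' = 0 by lra. by rewrite HGe //; lra.
  - by replace (t' + c - c) with t' by ring.
have Hpn_feas : feas pn.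
  split.
    move=> t Ht i; rewrite /pn; case: Rle_dec => H /=; [exact: HGv | apply: Hpsv; lra].
  move=> t t' Ht Ht'; apply: dk_le; first exact: Rabs_pos.
  move=> i; rewrite /pn; case: Rle_dec => H1 /=; case: Rle_dec => H2 /=.
  - exact: HGl.
  - have T1 := Tr (HGv i t) (HGv i c) (Hpsv (t' - c) i ltac:(lra)).
    rewrite (HGe i c) in T1; last lra.
    have := HGl i t c; rewrite (HGe i c); last lra.
    have := Hpsl 0 (t' - c) i ltac:(lra) ltac:(lra).
    have : Rabs (t - c) + Rabs (0 - (t' - c)) = Rabs (t - t') by split_Rabs; lra.
    lra.
  - have T1 := Tr (Hpsv (t - c) i ltac:(lra)) (HGv i c) (HGv i t').
    rewrite (HGe i c) in T1; last lra.
    have := HGl i c t'; rewrite (HGe i c); last lra.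
    have := Hpsl (t - c) 0 i ltac:(lra) ltac:(lra).
    have : Rabs (t - c - 0) + Rabs (c - t') = Rabs (t - t') by split_Rabs; lra.
    lra.
  - replace (t - t') with (t - c - (t' - c)) by ring; apply: Hpsl; lra.
have Hjp : 0 <= j * / pm by apply: Rmult_le_pos; lra.
have HT0 : 0 <= T by lra.
have HMw : forall t, T <= t -> Mw pn t <= j.
  move=> t Ht; apply: Mw_le => // v.
  have Hpv := Hphi v; set s' := t - c.
  have Hs' : j * / pm < s' by rewrite /s'; lra.
  have Hjv : j * / phi v <= j * / pm.
    apply: Rmult_le_compat_l => //; apply: Rinv_le_contravar => //; exact: Hpmle.
  have Hs0 : 0 <= s' by lra.
  have Hlat : latency ps v s' <= j * / phi v.
    apply: (Rmult_le_reg_l (phi v)) => //.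
    replace (phi v * (j * / phi v)) with j by (field; lra).
    apply: Rle_trans (Mw_ge phi ps v s') (Hpsb s' Hs0).
  have Htp : 0 <= t by lra.
  case: (lv_spec ps v Hs0) => [[L0 L1] [L2 L3]].
  case: (lv_spec pn v Htp) => [[N0 N1] [N2 N3]].
  suff : last_visit ps v s' + c <= last_visit pn v t.
    move=> Hle; rewrite /latency in Hlat *.
    have Es : s' = t - c by [].
    have : t - last_visit pn v t <= j * / phi v by lra.
    move=> H; have := Rmult_le_compat_l (phi v) _ _ (Rlt_le _ _ Hpv) H.
    by replace (phi v * (j * / phi v)) with j by (field; lra).
  apply: le_eps => eps He; case: (L3 _ He) => [[t' [[Ht' [r Hr]] Hlt]]|[Hz Hno]].
  - have : t' + c <= last_visit pn v t.
      have Es : s' = t - c by [].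
      apply: N2; split; first lra.
      exists r; rewrite Hpn_shift //; lra.
    lra.
  - exfalso; rewrite /latency Hz in Hlat; lra.
exists pn; split; last by move=> i; rewrite /pn; case: Rle_dec => H /=; [exact: HG0 | lra].
split => //.
rewrite (@part1 _ _ src tgt A phi k Hphi (Finite T) HT0) EJ.
apply: Rbar_le_antisym.
- rewrite /J /J_fin; apply: lub_le => x [t [Ht ->]]; exact: HMw.
- rewrite -EJ -(@part1 _ _ src tgt A phi k Hphi (Finite T) HT0); exact: (Jstar_le Hphi _ Hpn_feas).
Qed.

End Part3.

Unset Implicit Arguments.

Theorem mainTheorem2
  (V E : finType) (src tgt : E -> V) (A : E -> R) (phi : V -> R) (k : nat)
  (HV : inhabited V)
  (Hsimple : simple_graph src tgt)
  (Hconn : connected src tgt)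
  (HA : forall e, 0 < A e)
  (Hphi : forall v, 0 < phi v)
  (Hk : (1 <= k)%nat) :
  (forall T : Rbar, Rbar_le (Finite 0) T ->
     Jstar src tgt A phi k T = Jstar src tgt A phi k (Finite 0)) /\
  (forall T1 T2 : Rbar, Rbar_le (Finite 0) T1 -> Rbar_lt T1 T2 ->
     forall pi, optimal (k:=k) src tgt A phi T1 pi -> optimal (k:=k) src tgt A phi T2 pi) /\
  (forall p0 : Config V E k, valid_config A p0 ->
   forall T : R,
     Rbar_lt (Rbar_plus (diameter src tgt A)
                        (Rbar_mult (Jstar src tgt A phi k (Finite 0)) (Finite (/ phi_min phi))))
             (Finite T) ->
     exists pi, optimal (k:=k) src tgt A phi (Finite T) pi /\ forall i, pi 0 i = p0 i).
Proof.
split; first by move=> T HT; exact: part1.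
split; first by move=> T1 T2 H1 H2 pi; exact: part2.
exact: (part3 HV HA Hconn Hphi (Ordinal Hk)).
Qed.
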